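(* Let $\{g_k\}_{k\ge1}\subset\mathbb{R}^{+}\cup\{0\}$ and for $n=1,2,\dots$ define $\Gamma_{(n)}:\mathcal{O}\to\mathcal{O}$ by $$\Gamma_{(n)}\varphi(x)=\frac{\varphi(x)\exp\!\left(x\sum_{k=1}^{n}g_k\right)}{\sum_{y\in E_\varphi}\varphi(y)\exp\!\left(y\sum_{k=1}^{n}g_k\right)},\qquad x\in\mathbb{R}.$$ Then for any NFD $\varphi\in\mathcal{O}$ with $E_\varphi\subset[0,\infty)$ and any positive integers $n>m$, $$d\big(\Gamma_{(n)}\varphi,\Gamma_{(m)}\varphi\big)\le\sum_{x\in E_\varphi}\left(\exp\!\left(x\sum_{k=m+1}^{n}g_k\right)-1\right).$$
   Context: A normalized fitness distribution (NFD) is a function $\varphi:\mathbb{R}\to[0,1]$ whose support $E_\varphi=\{x:\varphi(x)\neq0\}$ is finite and which satisfies $\sum_{x\in E_\varphi}\varphi(x)=1$; $\mathcal{O}$ denotes the space of all NFDs. The metric $d$ on $\mathcal{O}$ is $d(\varphi_1,\varphi_2)=\sum_{x\in E_{\varphi_1}\cup E_{\varphi_2}}|\varphi_1(x)-\varphi_2(x)|$. In the paper, NFDs arise from populations with a fitness function $f:\Omega\to\mathbb{R}^{+}\cup\{0\}$, so fitness values are nonnegative. *)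

(* Defs.v *)
From HB Require Import structures.
From mathcomp Require Import all_boot all_order all_algebra.
From mathcomp Require Import all_classical all_reals all_analysis.
Set Implicit Arguments. Unset Strict Implicit. Unset Printing Implicit Defensive.
Import Order.TTheory GRing.Theory Num.Theory.
Local Open Scope classical_set_scope.
Local Open Scope ring_scope.

Definition supp (R : realType) (phi : R -> R) : set R := [set x | phi x != 0].

Definition is_NFD (R : realType) (phi : R -> R) : Prop :=
  (forall x, 0 <= phi x <= 1) /\ finite_set (supp phi) /\
  \sum_(x \in supp phi) phi x = 1.

Definition dist (R : realType) (phi1 phi2 : R -> R) : R :=
  \sum_(x \in supp phi1 `|` supp phi2) `|phi1 x - phi2 x|.

Definition cumg (R : realType) (g : nat -> R) (n : nat) : R :=
  \sum_(1 <= k < n.+1) g k.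

Definition Gamma (R : realType) (g : nat -> R) (n : nat) (phi : R -> R) : R -> R :=
  fun x => phi x * expR (x * cumg g n) /
           \sum_(y \in supp phi) phi y * expR (y * cumg g n).

(* Main.v *)
Require Import Defs.
From HB Require Import structures.
From mathcomp Require Import all_boot all_order all_algebra.
From mathcomp Require Import all_classical all_reals all_analysis.
From mathcomp Require Import ring lra finmap.
Import Order.TTheory GRing.Theory Num.Theory.
Local Open Scope classical_set_scope.
Local Open Scope ring_scope.

Lemma sum_ge_term (R : realType) (s : seq R) (F : R -> R) x :
  uniq s -> x \in s -> (forall y, y \in s -> 0 <= F y) -> F x <= \sum_(y <- s) F y.
Proof.
move=> us xs F0; rewrite (bigD1_seq x) //= lerDl.
rewrite big_seq_cond; apply: sumr_ge0 => y /andP[ys _]; exact: F0.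
Qed.

Lemma mem_supp (R : realType) (phi : R -> R) (x : R) (h : finite_set (supp phi)) :
  (x \in fset_set (supp phi)) = (phi x != 0).
Proof. rewrite in_fset_set //. by apply/idP/idP; rewrite in_setE. Qed.

Lemma expR_ge1 (R : realType) (x : R) : 0 <= x -> 1 <= expR x.
Proof. move=> hx; apply: le_trans (expR_ge1Dx x); lra. Qed.

Lemma key (R : realType) (q A U : R) : 0 <= q -> q <= 1 -> 0 <= A -> q * A <= U ->
  `|q * (A - U) / (1 + U)| <= (1 - 2 * q) * (q * A) + q * U.
Proof.
move=> q0 q1 A0 qAU.
have U0 : 0 <= U by apply: le_trans qAU; rewrite mulr_ge0.
have U1 : 0 < 1 + U by lra.
have B0 : 0 <= (1 - 2 * q) * (q * A) + q * U.
  have : q * (q * A) <= q * U by rewrite ler_wpM2l.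
  have : 0 <= q * A * (1 - q) by rewrite !mulr_ge0 // subr_ge0.
  nra.
rewrite ler_norml !ler_pdivrMr // ler_pdivlMr //; apply/andP; split.
- have : 0 <= q * A * (1 - q) by rewrite !mulr_ge0 // subr_ge0.
  have : 0 <= ((1 - 2 * q) * (q * A) + q * U) * U by rewrite mulr_ge0.
  nra.
- have : q * (q * A) <= q * U by rewrite ler_wpM2l.
  have : 0 <= ((1 - 2 * q) * (q * A) + q * U) * U by rewrite mulr_ge0.
  nra.
Qed.

Theorem lemma2 (R : realType) (g : nat -> R)
  (hg : forall k : nat, (1 <= k)%N -> 0 <= g k)
  (phi : R -> R) (hphi : is_NFD phi)
  (hsupp : supp phi `<=` [set x : R | 0 <= x])
  (n m : nat) (hm : (0 < m)%N) (hmn : (m < n)%N) :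
  dist (Gamma g n phi) (Gamma g m phi) <=
  \sum_(x \in supp phi) (expR (x * \sum_(m.+1 <= k < n.+1) g k) - 1).
Proof.
case: hphi => [h01 [hfin hsum]].
set s := fset_set (supp phi).
have us : uniq s := fset_uniq s.
have ms : forall x, (x \in s) = (phi x != 0) := fun x => @mem_supp R phi x hfin.
have s0 : forall x, x \in s -> 0 <= x.
  by move=> x; rewrite ms => hx; apply: hsupp.
have sp : forall x, x \in s -> 0 < phi x.
  by move=> x; rewrite ms lt0r => ->; case/andP: (h01 x).
rewrite fsbig_finite // -/s in hsum.
rewrite fsbig_finite // -/s.
set a := cumg g m.
set c := \sum_(m.+1 <= k < n.+1) g k.
have ha : 0 <= a.
  rewrite /a /cumg big_nat; apply: sumr_ge0 => k /andP[hk _]; exact: hg.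
have hc : 0 <= c.
  rewrite /c big_nat; apply: sumr_ge0 => k /andP[hk _]; apply: hg.
  exact: leq_trans hk.
have hb : cumg g n = a + c by rewrite /cumg (@big_cat_nat _ _ _ m.+1) // ltnW.
set w := fun y => phi y * expR (y * a).
set r := fun y => expR (y * c).
set Zm := \sum_(y <- s) w y.
set Zn := \sum_(y <- s) w y * r y.
have Gm : forall x, Gamma g m phi x = w x / Zm.
  by move=> x; rewrite /Gamma fsbig_finite.
have wr : forall y, phi y * expR (y * cumg g n) = w y * r y.
  by move=> y; rewrite hb /w /r mulrDr expRD mulrA.
have Gn : forall x, Gamma g n phi x = w x * r x / Zn.
  move=> x; rewrite /Gamma fsbig_finite // wr; congr (_ / _).
  by apply: eq_bigr => y _; rewrite wr.
have w0 : forall y, y \in s -> 0 <= w y.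
  move=> y ys; rewrite /w mulr_ge0 ?expR_ge0 //; exact: ltW (sp y ys).
have r1 : forall y, y \in s -> 1 <= r y.
  move=> y ys; apply: expR_ge1; rewrite mulr_ge0 //; exact: s0.
have Zm1 : 1 <= Zm.
  rewrite -hsum /Zm big_seq [X in _ <= X]big_seq; apply: ler_sum => y ys.
  rewrite /w -{1}(mulr1 (phi y)) ler_wpM2l ?(ltW (sp y ys)) //.
  apply: expR_ge1; rewrite mulr_ge0 //; exact: s0.
have ZnZm : Zm <= Zn.
  rewrite /Zn /Zm big_seq [X in _ <= X]big_seq; apply: ler_sum => y ys.
  by rewrite -{1}(mulr1 (w y)) ler_wpM2l ?w0 ?r1.
have Zm0 : 0 < Zm by apply: Order.POrderTheory.lt_le_trans ltr01 Zm1.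
have Zn0 : 0 < Zn by apply: Order.POrderTheory.lt_le_trans Zm0 ZnZm.
have suppG : forall k, (forall x, Gamma g k phi x = phi x * expR (x * cumg g k)
     / \sum_(y <- s) phi y * expR (y * cumg g k)) ->
     0 < \sum_(y <- s) phi y * expR (y * cumg g k) ->
     supp (Gamma g k phi) = supp phi.
  move=> k Gk Zk; apply/seteqP; split => x; rewrite /supp /= Gk !mulf_eq0 invr_eq0
    (gt_eqF (expR_gt0 _)) (gt_eqF Zk) !orbF //.
have Gk : forall k x, Gamma g k phi x = phi x * expR (x * cumg g k)
     / \sum_(y <- s) phi y * expR (y * cumg g k).
  by move=> k x; rewrite /Gamma fsbig_finite.
rewrite /dist (suppG n (Gk n)) ?(suppG m (Gk m)) ?setUid; last 2 first.
- exact: Zm0.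
- by rewrite (eq_bigr (fun y => w y * r y)) // => y _; rewrite wr.
rewrite fsbig_finite // -/s.
set q := fun y => w y / Zm.
set U := \sum_(y <- s) q y * (r y - 1).
have hq1 : \sum_(y <- s) q y = 1 by rewrite /q -mulr_suml -/Zm divff // gt_eqF.
have hqr : \sum_(y <- s) q y * r y = Zn / Zm.
  by rewrite /Zn mulr_suml; apply: eq_bigr => y _; rewrite /q mulrAC.
have hU : Zn / Zm = 1 + U.
  rewrite /U; under eq_bigr do rewrite mulrBr mulr1.
  by rewrite sumrB hq1 hqr addrC subrK.
have q0 : forall y, y \in s -> 0 <= q y.
  by move=> y ys; rewrite /q divr_ge0 ?w0 // ltW.
have q1 : forall y, y \in s -> q y <= 1.
  by move=> y ys; rewrite -hq1; apply: sum_ge_term.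
have uU : forall y, y \in s -> q y * (r y - 1) <= U.
  move=> y ys; apply: (@sum_ge_term _ _ (fun y => q y * (r y - 1))) => // z zs.
  by rewrite mulr_ge0 ?q0 // subr_ge0 r1.
apply: (@le_trans _ _ (\sum_(x <- s) ((1 - 2 * q x) * (q x * (r x - 1)) + q x * U))).
- rewrite big_seq [X in _ <= X]big_seq; apply: ler_sum => x xs.
  rewrite Gn Gm (_ : w x * r x / Zn - w x / Zm = q x * ((r x - 1) - U) / (1 + U)).
    apply: key; rewrite ?q0 ?q1 ?uU ?subr_ge0 ?r1 //.
  rewrite (_ : r x - 1 - U = r x - (1 + U)); last by ring.
  rewrite -hU /q; field.
  by rewrite !gt_eqF.
rewrite big_split /= -mulr_suml hq1 mul1r /U -big_split /= big_seq [X in _ <= X]big_seq.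
apply: ler_sum => x xs.
have := q0 x xs; have := q1 x xs; have := r1 x xs.
rewrite /r => ? ? ?.
have : 0 <= (expR (x * c) - 1) * ((1 - 2 * q x) ^+ 2 + 1).
  by rewrite mulr_ge0 // ?subr_ge0 // addr_ge0 // sqr_ge0.
nra.
Qed.
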